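(* For integers $N>3$ and $k\in\{1,\dots,N-2\}$ and real $t>0$, let $I_t(k,N)=\sum_{j=k+1}^{N-1}e^{-t(1-\cos(\pi j/N))}$. Then (i) $\displaystyle I_t(k,N)\le \frac12\sqrt{\frac\pi2}\,\frac{N}{\sqrt t}\,e^{-2tk^2/N^2}$, and (ii) $\displaystyle I_t(k,N)\le \frac12\,\frac{N^2}{kt}\,e^{-2tk^2/N^2}$. *)

(* Defs.v *)
From Stdlib Require Import Reals.
Open Scope R_scope.

(* I_t(k,N) = sum_{j=k+1}^{N-1} exp(-t (1 - cos(pi j / N))).
   Written as sum_{i=0}^{N-2-k} of the term at j = k+1+i
   (sum_f_R0 f n = f 0 + ... + f n); valid since k <= N-2. *)
Definition It (t : R) (k N : nat) : R :=
  sum_f_R0 (fun i => exp (- t * (1 - cos (PI * INR (k + 1 + i) / INR N))))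
           (N - 2 - k).

(* Main.v *)
Require Import Defs.
From Stdlib Require Import Reals.
Open Scope R_scope.
From Stdlib Require Import Lra Lia Psatz.

Module MC.
Set Warnings "-all".
From HB Require Import structures.
From mathcomp Require Import all_boot all_order all_algebra.
From mathcomp Require Import all_classical all_reals all_analysis measurable_realfun gauss_integral ftc.
From mathcomp Require Import Rstruct Rstruct_topology.
From mathcomp Require Import ring lra.
Import Order.TTheory GRing.Theory Num.Theory.
Import numFieldNormedType.Exports.
Set Implicit Arguments. Unset Strict Implicit. Unset Printing Implicit Defensive.
Local Open Scope classical_set_scope.
Local Open Scope ring_scope.

Section G.
Context {R : realType}.
Notation mu := (@lebesgue_measure R).
Definition F0 (x : R) := \int[mu]_(t in `[0, x]) gauss_fun t.

Lemma intS (A : set R) : measurable A -> mu.-integrable A (EFin \o gauss_fun).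
Proof. move=> mA; apply: integrableS (integrableT_gauss) => //. Qed.

Lemma F0_ub (x : R) : F0 x <= Num.sqrt pi / 2.
Proof.
rewrite -lee_fin /F0 /Rintegral fineK; last first.
  apply: integrable_fin_num => //; exact: intS.
rewrite -integral0y_gauss.
apply: ge0_subset_integral => //=.
all: try (by move=> y _; rewrite lee_fin gauss_fun_ge0).
all: try (by move=> y /=; rewrite !in_itv /= => /andP[-> _]).
all: try (apply/measurable_EFinP; apply: measurable_funTS; exact: measurable_gauss_fun).
Qed.

Lemma F0_step (x y : R) : 0 <= x -> x <= y -> (y - x) * gauss_fun y <= F0 y - F0 x.
Proof.
move=> x0 xy; rewrite /F0 Rintegral_itvB; last 3 first.
- exact: intS.
- by rewrite bnd_simp.
- by rewrite bnd_simp.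
have hm : mu `]x, y] = (y - x)%:E.
  rewrite lebesgue_measure_itv /= lte_fin.
  have [xy'|yx] := ltP x y; first by rewrite EFinB.
  have -> : x = y by apply/le_anti; rewrite xy yx.
  by rewrite subrr.
have -> : (y - x) * gauss_fun y = \int[mu]_(t in `]x, y]) (gauss_fun y).
  rewrite Rintegral_cst //; rewrite [X in fine X](_ : _ = (y-x)%:E); last exact: hm.
  by rewrite mulrC.
apply: le_Rintegral => //.
- apply: (@integrableS _ _ _ mu `[x, y]) => //=.
  + by apply: subset_itv; rewrite bnd_simp.
  + apply: continuous_compact_integrable; first exact: segment_compact.
    by apply: continuous_subspaceT => ?; exact: cst_continuous.
- exact: intS.
- move=> t; rewrite /= in_itv /= => /andP[xt ty].
  rewrite /gauss_fun ler_expR lerN2.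
  have : (0:R) <= t by apply: ltW; apply: le_lt_trans xt.
  move=> t0; nra.
Qed.

Lemma gsum_F0 (u : R) (M : nat) : 0 < u ->
  \sum_(0 <= m < M) u * gauss_fun (u * (m.+1)%:R) <= F0 (u * M%:R).
Proof.
move=> u0; elim: M => [|M IH].
  rewrite big_geq // /F0; apply: Rintegral_ge0 => t _; exact: gauss_fun_ge0.
rewrite big_nat_recr //=.
have := F0_step (x := u * M%:R) (y := u * M.+1%:R).
have h1 : 0 <= u * M%:R by rewrite mulr_ge0 // ltW.
have h2 : u * M%:R <= u * M.+1%:R by rewrite ler_pM2l // ler_nat.
move=> /(_ h1 h2).
have -> : u * M.+1%:R - u * M%:R = u by rewrite -mulrBr -natrB // subSnn mulr1.
move=> H; have := lerD IH H; rewrite addrCA subrr addr0; apply: le_trans.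
by rewrite addrC.
Qed.

Lemma gsum_ub (u : R) (M : nat) : 0 < u ->
  \sum_(0 <= m < M) u * gauss_fun (u * (m.+1)%:R) <= Num.sqrt pi / 2.
Proof. move=> u0; exact: le_trans (gsum_F0 M u0) (F0_ub _). Qed.
End G.

Lemma RcosE (x : R) : Rtrigo_def.cos x = cos x.
Proof.
rewrite /Rtrigo_def.cos; case: exist_cos => y.
rewrite /cos_in /infinite_sum => ub.
have H : series (cos_coeff' x) @ \oo --> y.
  rewrite -cvg_shiftS /=. apply/(@cvgrPdist_lt _ R^o) => /= e /RltP /ub[N Nub].
  near=> n.
  have nN : (n >= N)%coq_nat by apply/ssrnat.leP; near: n; exact: nbhs_infty_ge.
  move: Nub => /(_ _ nN) /[!RdistE] /RltP /=.
  rewrite distrC sum_f_R0E; congr (`| _ - _ | < e).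
  apply: eq_bigr=> k _; rewrite /cos_n /cos_coeff' RdivE !RpowE factE INRE.
  rewrite (_ : (2 * k)%coq_nat = k.*2); last by rewrite -mul2n.
  rewrite (_ : Rsqr x = x ^+ 2); last by rewrite /Rsqr expr2.
  rewrite -exprM mul2n.
  have m1 : (-1)%coqR = - 1 :> R by rewrite -R1E -RoppE; reflexivity.
  rewrite m1 RmultE.
  by rewrite mulrAC.
Unshelve. all: try by end_near.
have H2 := @cvg_cos_coeff' R x.
exact: (cvg_unique _ H H2).
Qed.


Lemma RpiE : PI = pi.
Proof.
have P0 : 0 < PI by apply/RltP; exact: PI_RGT_0.
have p0 : 0 < (pi : R) := @pi_gt0 R.
apply/le_anti/andP; split.
- rewrite leNgt; apply/negP => H.
  have h1 : - (PI / 2) < pi / 2 < PI / 2.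
    apply/andP; split; last by rewrite ltr_pM2r.
    apply: (@lt_trans _ _ 0); first by rewrite oppr_lt0 divr_gt0.
    by rewrite divr_gt0.
  move/andP: h1 => [/RltP a /RltP b].
  have := cos_gt_0 _ a b; rewrite RcosE cos_pihalf => /RltP; by rewrite ltxx.
- rewrite leNgt; apply/negP => H.
  have h1 : - (pi / 2) < PI / 2 < pi / 2.
    apply/andP; split; last by rewrite ltr_pM2r.
    apply: (@lt_trans _ _ 0); first by rewrite oppr_lt0 divr_gt0.
    by rewrite divr_gt0.
  have := cos_gt0_pihalf h1; rewrite -RcosE cos_PI2; by rewrite ltxx.
Qed.

Lemma gsum_std (a : R) (n : nat) : (0 < a)%coqR ->
  (sum_f_R0 (fun i => exp (- a * INR (S i) ^ 2)) n <= / 2 * sqrt (PI / a))%coqR.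
Proof.
move=> /RltP a0; apply/RleP.
have u0 : 0 < Num.sqrt a by rewrite sqrtr_gt0.
have := @gsum_ub _ _ n.+1 u0; rewrite -mulr_sumr => H.
rewrite sum_f_R0E RpiE RsqrtE RinvE RdivE.
under eq_bigr do rewrite RexpE RpowE INRE.
have E (x : R) : gauss_fun (Num.sqrt a * x) = expR (- a * x ^+ 2).
  by rewrite /gauss_fun exprMn sqr_sqrtr ?(ltW a0) // mulNr.
rewrite (eq_bigr _ (fun i _ => E _)) in H.
rewrite (sqrtrM _ (@pi_ge0 R)) (sqrtrV (ltW a0)).
have two : (2%coqR : R) = 2%:R by rewrite -[2%coqR]/(1+1)%coqR.
rewrite two.
set S := (\sum_(_ <= _ < _) _).
suff : Num.sqrt a * S <= Num.sqrt a * (2^-1 * (Num.sqrt pi * (Num.sqrt a)^-1)).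
  by rewrite ler_pM2l.
apply: (le_trans H).
have -> : Num.sqrt a * (2^-1 * (Num.sqrt pi / Num.sqrt a)) = Num.sqrt pi / 2.
  by field; rewrite gt_eqF.
by [].
Qed.
End MC.

Lemma sl a : sin_lb a = a - a^3/6 + a^5/120 - a^7/5040.
Proof. unfold sin_lb, sin_approx, sin_term. cbn -[INR Factorial.fact pow]. rewrite !INR_IZR_INZ. simpl. field. Qed.
Lemma cl a : cos_lb a = 1 - a^2/2 + a^4/24 - a^6/720.
Proof. unfold cos_lb, cos_approx, cos_term. cbn -[INR Factorial.fact pow]. rewrite !INR_IZR_INZ. simpl. field. Qed.

Lemma jordan y : 0 <= y -> y <= PI/2 -> 2*y/PI <= sin y.
Proof.
intros H0 H1.
assert (P3 : 3 < PI) by (generalize PI2_3_2; lra).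
assert (P4 : PI <= 4) by apply PI_4.
assert (HP : 0 < PI) by lra.
destruct (Rle_lt_dec y (7/5)) as [Hy|Hy].
- destruct (SIN y H0 ltac:(lra)) as [Hs _]. rewrite sl in Hs.
  assert (y^5/120 - y^7/5040 >= 0).
  { assert (y^2 <= 2) by nra.
    replace (y^5/120 - y^7/5040) with (y^5 * (42 - y^2)/5040) by field.
    apply Rle_ge, Rmult_le_pos; [apply Rmult_le_pos; [apply pow_le; lra| nra]|lra]. }
  assert (2*y/PI <= 2*y/3).
  { unfold Rdiv. apply Rmult_le_compat_l; [lra|]. apply Rinv_le_contravar; lra. }
  assert (2*y/3 <= y - y^3/6) by nra.
  lra.
- set (z := PI/2 - y).
  assert (Hz0 : 0 <= z) by (unfold z; lra).
  assert (Hz1 : z <= 3/5) by (unfold z; lra).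
  replace y with (PI/2 - z) by (unfold z; ring).
  rewrite sin_shift.
  destruct (COS z ltac:(lra) ltac:(lra)) as [Hc _]. rewrite cl in Hc.
  assert (z^4/24 - z^6/720 >= 0).
  { replace (z^4/24 - z^6/720) with (z^4 * (30 - z^2)/720) by field.
    apply Rle_ge, Rmult_le_pos; [apply Rmult_le_pos; [apply pow_le; lra| nra]|lra]. }
  assert (2 * (PI/2 - z)/PI = 1 - 2*z/PI) by (field; lra).
  assert (z/2 <= 2/PI).
  { assert (2/PI >= 1/2). { apply Rle_ge. apply (Rmult_le_reg_r PI); [lra|]. 
      field_simplify; lra. }
    lra. }
  assert (z^2/2 <= 2*z/PI).
  { replace (z^2/2) with (z * (z/2)) by field. replace (2*z/PI) with (z*(2/PI)) by (field; lra).
    apply Rmult_le_compat_l; lra. }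
  lra.
Qed.

Lemma cos_jordan x : 0 <= x -> x <= PI -> 2 * x^2 / PI^2 <= 1 - cos x.
Proof.
intros H0 H1.
assert (HP : 0 < PI) by apply PI_RGT_0.
replace x with (2 * (x/2)) at 2 by field.
rewrite cos_2a_sin.
assert (Hs := jordan (x/2) ltac:(lra) ltac:(lra)).
assert (0 <= 2 * (x/2) / PI) by (apply Rmult_le_pos; [lra| left; apply Rinv_0_lt_compat; lra]).
replace (2 * x^2/PI^2) with (2 * ((2*(x/2)/PI) * (2*(x/2)/PI))) by (field; lra).
nra.
Qed.

Lemma geom_exp b n : 0 < b -> sum_f_R0 (fun i => exp (- b * INR (S i))) n <= / b.
Proof.
intros Hb.
assert (Heq : sum_f_R0 (fun i => exp (- b * INR (S i))) n * (exp b - 1) = 1 - exp (- b * INR (S n))).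
{ induction n as [|n IH].
  - simpl. replace (- b * 1) with (- b) by ring.
    rewrite Rmult_minus_distr_l, <- exp_plus. replace (-b + b) with 0 by ring. rewrite exp_0. ring.
  - rewrite tech5, Rmult_plus_distr_r, IH.
    rewrite Rmult_minus_distr_l, <- exp_plus.
    replace (- b * INR (S (S n)) + b) with (- b * INR (S n)) by (rewrite (S_INR (S n)); ring). ring. }
assert (Hexp : 1 + b <= exp b) by apply exp_ineq1_le.
assert (0 < exp (- b * INR (S n))) by apply exp_pos.
assert (0 <= sum_f_R0 (fun i => exp (- b * INR (S i))) n).
{ apply cond_pos_sum. intro; left; apply exp_pos. }
apply (Rmult_le_reg_r b); [lra|]. rewrite Rinv_l by lra.
nra.
Qed.

Lemma exp_mono x y : x <= y -> exp x <= exp y.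
Proof. intros [H|H]; [left; apply exp_increasing; exact H| rewrite H; lra]. Qed.

Lemma term_bound (N k i : nat) (t : R) : (3 < N)%nat -> (k + 1 + i < N)%nat -> 0 < t ->
  exp (- t * (1 - cos (PI * INR (k + 1 + i) / INR N)))
  <= exp (- (2 * t / INR N ^ 2) * INR (k + 1 + i) ^ 2).
Proof.
intros HN Hj Ht. apply exp_mono.
assert (HP : 0 < PI) by apply PI_RGT_0.
assert (HNr : 0 < INR N) by (apply lt_0_INR; lia).
assert (Hjr : INR (k + 1 + i) <= INR N) by (apply le_INR; lia).
assert (Hj0 : 0 <= INR (k + 1 + i)) by apply pos_INR.
set (x := PI * INR (k + 1 + i) / INR N).
assert (Hx0 : 0 <= x) by (unfold x; apply Rmult_le_pos; [nra | left; apply Rinv_0_lt_compat; lra]).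
assert (Hx1 : x <= PI).
{ unfold x. apply (Rmult_le_reg_r (INR N)); [lra|]. field_simplify; nra. }
assert (Hc := cos_jordan x Hx0 Hx1).
assert (Heq : 2 * x ^ 2 / PI ^ 2 = 2 / INR N ^ 2 * INR (k + 1 + i) ^ 2) by (unfold x; field; lra).
rewrite Heq in Hc.
replace (- (2 * t / INR N ^ 2) * INR (k + 1 + i) ^ 2) with (- t * (2 / INR N ^ 2 * INR (k + 1 + i) ^ 2)) by (field; lra).
nra.
Qed.

Theorem lemma2 (N k : nat) (t : R) :
  (3 < N)%nat -> (1 <= k)%nat -> (k <= N - 2)%nat -> 0 < t ->
  It t k N <= / 2 * sqrt (PI / 2) * (INR N / sqrt t)
               * exp (- (2 * t * INR k ^ 2 / INR N ^ 2))
  /\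
  It t k N <= / 2 * (INR N ^ 2 / (INR k * t))
               * exp (- (2 * t * INR k ^ 2 / INR N ^ 2)).
Proof.
intros HN Hk HkN Ht.
assert (HP : 0 < PI) by apply PI_RGT_0.
assert (HNr : 0 < INR N) by (apply lt_0_INR; lia).
assert (Hkr : 1 <= INR k) by (apply (le_INR 1); lia).
set (a := 2 * t / INR N ^ 2).
assert (Ha : 0 < a) by (unfold a; apply Rmult_lt_0_compat; [lra | apply Rinv_0_lt_compat; nra]).
set (E := exp (- (2 * t * INR k ^ 2 / INR N ^ 2))).
assert (HE : 0 < E) by apply exp_pos.
assert (Tb : forall i, (i <= N - 2 - k)%nat ->
  exp (- t * (1 - cos (PI * INR (k + 1 + i) / INR N))) <= exp (- a * INR (k + 1 + i) ^ 2)).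
{ intros i Hi. apply term_bound; [lia|lia|lra]. }
assert (Hj : forall i, INR (k + 1 + i) = INR k + INR (S i)).
{ intro i. rewrite <- plus_INR. f_equal. lia. }
assert (Hi0 : forall i, 0 <= INR (S i)) by (intro; apply pos_INR).
split.
- apply Rle_trans with (sum_f_R0 (fun i => exp (- a * INR (S i) ^ 2) * E) (N - 2 - k)).
  + unfold It. apply sum_Rle. intros i Hi. eapply Rle_trans; [apply Tb; exact Hi|].
    unfold E. rewrite <- exp_plus. apply exp_mono. rewrite Hj.
    replace (- (2 * t * INR k ^ 2 / INR N ^ 2)) with (- a * INR k ^ 2) by (unfold a; field; lra).
    assert (0 <= a * (INR k * INR (S i))) by (apply Rmult_le_pos; [lra|apply Rmult_le_pos; [lra|apply Hi0]]).
    nra.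
  + rewrite <- scal_sum.
    assert (Hs := @MC.gsum_std a (N - 2 - k) Ha).
    replace (/ 2 * sqrt (PI / 2) * (INR N / sqrt t) * E) with (E * (/ 2 * sqrt (PI / a))).
    * apply Rmult_le_compat_l; lra.
    * assert (Hst : 0 < sqrt t) by (apply sqrt_lt_R0; lra).
      replace (PI / a) with (PI / 2 * (INR N ^ 2 / t)) by (unfold a; field; lra).
      rewrite sqrt_mult_alt by lra. rewrite (sqrt_div_alt (INR N ^ 2) t) by lra. rewrite sqrt_pow2 by lra.
      field; lra.
- set (b := 2 * a * INR k).
  assert (Hb : 0 < b) by (unfold b; nra).
  apply Rle_trans with (sum_f_R0 (fun i => exp (- b * INR (S i)) * E) (N - 2 - k)).
  + unfold It. apply sum_Rle. intros i Hi. eapply Rle_trans; [apply Tb; exact Hi|].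
    unfold E. rewrite <- exp_plus. apply exp_mono. rewrite Hj.
    replace (- (2 * t * INR k ^ 2 / INR N ^ 2)) with (- a * INR k ^ 2) by (unfold a; field; lra).
    unfold b.
    assert (0 <= a * INR (S i) ^ 2) by (apply Rmult_le_pos; [lra | apply pow2_ge_0]).
    nra.
  + rewrite <- scal_sum.
    assert (Hs := geom_exp b (N - 2 - k) Hb).
    apply Rle_trans with (E * / b); [apply Rmult_le_compat_l; lra|].
    replace (E * / b) with (/ 4 * (INR N ^ 2 / (INR k * t)) * E) by (unfold b, a; field; lra).
    apply Rmult_le_compat_r; [lra|].
    apply Rmult_le_compat_r; [|lra].
    unfold Rdiv. apply Rmult_le_pos; [nra|]. left; apply Rinv_0_lt_compat; nra.
Qed.
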